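(* Consider an operational theory (describing an experiment) containing a which-way measurement $Z$ and a which-phase measurement $X$, each with outcomes in $\{+1,-1\}$, and suppose some realizable operational state $\vec{s}_1$ satisfies the $A_1^2$-orbit-realizability condition relative to $Z$ and $X$. If the path distinguishability $\mathcal{P}=|\langle Z\rangle_{\vec{s}_1}|$ and fringe visibility $\mathcal{V}=|\langle X\rangle_{\vec{s}_1}|$ of this state satisfy $\mathcal{V}+\mathcal{P}>1$, then the operational theory (experiment) admits no (generalized-)noncontextual ontological model.
   Context: An operational theory (for a single system, prepare-measure scenario) specifies a set of preparations $P$, measurements $M$, and probabilities $\mathbb{P}(y|M,P)$. Each preparation is represented by a real vector $\vec{s}_P$ (its operational state) and each effect $[y|M]$ by a real vector $\vec{e}_{y|M}$ with $\mathbb{P}(y|M,P)=\vec{s}_P\cdot\vec{e}_{y|M}$; two preparations are operationally equivalent iff they have the same vector. The set of realizable operational states is closed under convex mixtures. For a measurement $M$ with outcomes $\pm1$, $\langle M\rangle_{\vec{s}}=\mathbb{P}(+1|M,\vec{s})-\mathbb{P}(-1|M,\vec{s})$. An ontological model assigns a (finite) set $\Lambda$, to each preparation $P$ a distribution $\mu(\lambda|P)$, and to each measurement $M$ a conditional distribution $\xi(y|M,\lambda)$, with $\mathbb{P}(y|M,P)=\sum_\lambda\xi(y|M,\lambda)\mu(\lambda|P)$. It is (generalized, preparation-)noncontextual if operationally equivalent preparations receive the same distribution; in particular $\sum_i w_i\vec{s}_i=\sum_j w'_j\vec{s}'_j$ (probability weights) implies $\sum_i w_i\mu(\cdot|P_i)=\sum_j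 w'_j\mu(\cdot|P'_j)$. A state $\vec{s}_1$ satisfies the $A_1^2$-orbit-realizability condition relative to $M,M'$ if there exist realizable operational states $\vec{s}_2,\vec{s}_3,\vec{s}_4$ with $\langle M\rangle_{\vec{s}_1}=\langle M\rangle_{\vec{s}_2}=-\langle M\rangle_{\vec{s}_3}=-\langle M\rangle_{\vec{s}_4}$, $\langle M'\rangle_{\vec{s}_1}=-\langle M'\rangle_{\vec{s}_2}=-\langle M'\rangle_{\vec{s}_3}=\langle M'\rangle_{\vec{s}_4}$, and $\tfrac12\vec{s}_1+\tfrac12\vec{s}_3=\tfrac12\vec{s}_2+\tfrac12\vec{s}_4$. *)

(* Defs.v *)
From HB Require Import structures.
From mathcomp Require Import all_boot all_order all_algebra.
Set Implicit Arguments.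
Unset Strict Implicit.
Unset Printing Implicit Defensive.
Import Order.TTheory GRing.Theory Num.Theory.
Local Open Scope ring_scope.

Definition dotv (R : realFieldType) (d : nat) (s e : 'rV[R]_d) : R :=
  \sum_(i < d) s 0 i * e 0 i.

(* Preparations are represented by operational states (vectors st P),
   effects [y|M] by vectors eff M y, with P(y|M,P) = st P . eff M y. *)
Record opTheory (R : realFieldType) := OpTheory {
  odim : nat;
  Prep : Type;
  Meas : Type;
  Outc : Meas -> finType;
  st : Prep -> 'rV[R]_odim;
  eff : forall M : Meas, Outc M -> 'rV[R]_odim;
  prob_ge0 : forall (P : Prep) (M : Meas) (y : Outc M), 0 <= dotv (st P) (eff y);
  prob_sum1 : forall (P : Prep) (M : Meas), \sum_(y : Outc M) dotv (st P) (eff y) = 1;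
  mix_closed : forall (P P' : Prep) (w : R), 0 <= w -> w <= 1 ->
      exists P'' : Prep, st P'' = w *: st P + (1 - w) *: st P'
}.

Definition oprob (R : realFieldType) (T : opTheory R) (M : Meas T)
  (y : Outc M) (s : 'rV[R]_(odim T)) : R := dotv s (eff y).

Definition realizable (R : realFieldType) (T : opTheory R) (s : 'rV[R]_(odim T)) :=
  exists P : Prep T, st P = s.

Record binMeas (R : realFieldType) (T : opTheory R) := BinMeas {
  bM : Meas T;
  bplus : Outc bM;
  bminus : Outc bM;
  b_distinct : bplus != bminus;
  b_exhaust : forall y : Outc bM, y = bplus \/ y = bminus
}.

Definition expect (R : realFieldType) (T : opTheory R) (M : binMeas T)
  (s : 'rV[R]_(odim T)) : R :=
  oprob (bplus M) s - oprob (bminus M) s.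

Definition A12_orbit (R : realFieldType) (T : opTheory R) (M M' : binMeas T)
  (s1 : 'rV[R]_(odim T)) : Prop :=
  exists s2 s3 s4 : 'rV[R]_(odim T),
    [/\ realizable s2 /\ realizable s3 /\ realizable s4,
        (expect M s1 = expect M s2 /\ expect M s2 = - expect M s3 /\
          - expect M s3 = - expect M s4),
        (expect M' s1 = - expect M' s2 /\ - expect M' s2 = - expect M' s3 /\
          - expect M' s3 = expect M' s4) &
        (1/2) *: s1 + (1/2) *: s3 = (1/2) *: s2 + (1/2) *: s4].

Definition is_ont_model (R : realFieldType) (T : opTheory R) (L : finType)
  (mu : Prep T -> L -> R) (xi : forall M : Meas T, Outc M -> L -> R) : Prop :=
  [/\ (forall P l, 0 <= mu P l),
      (forall P, \sum_(l : L) mu P l = 1),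
      (forall M (y : Outc M) l, 0 <= xi M y l),
      (forall M l, \sum_(y : Outc M) xi M y l = 1) &
      (forall P M (y : Outc M),
          oprob y (st P) = \sum_(l : L) xi M y l * mu P l)].

Definition prob_weights (R : realFieldType) (n : nat) (w : 'I_n -> R) : Prop :=
  (forall i, 0 <= w i) /\ \sum_(i < n) w i = 1.

(* (Generalized, preparation-)noncontextuality: whenever two convex mixtures of
   preparations have the same operational state, the corresponding mixtures of
   ontic distributions coincide.  (With n = m = 1 this says operationally
   equivalent preparations receive the same distribution.) *)
Definition noncontextual (R : realFieldType) (T : opTheory R) (L : finType)
  (mu : Prep T -> L -> R) : Prop :=
  forall (n m : nat) (w : 'I_n -> R) (P : 'I_n -> Prep T)
         (w' : 'I_m -> R) (P' : 'I_m -> Prep T),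
    prob_weights w -> prob_weights w' ->
    \sum_(i < n) w i *: st (P i) = \sum_(j < m) w' j *: st (P' j) ->
    forall l : L, \sum_(i < n) w i * mu (P i) l = \sum_(j < m) w' j * mu (P' j) l.

Definition has_NC_model (R : realFieldType) (T : opTheory R) : Prop :=
  exists (L : finType) (mu : Prep T -> L -> R)
         (xi : forall M : Meas T, Outc M -> L -> R),
    is_ont_model mu xi /\ noncontextual mu.

(* Main.v *)
Require Import Defs.
From HB Require Import structures.
From mathcomp Require Import all_boot all_order all_algebra.
From mathcomp Require Import ring lra.
Import Order.TTheory GRing.Theory Num.Theory.
Local Open Scope ring_scope.

Lemma sum_bin (R : realFieldType) (T : opTheory R) (M : binMeas T) (f : Outc (bM M) -> R) :
  \sum_(y : Outc (bM M)) f y = f (bplus M) + f (bminus M).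
Proof.
rewrite (bigD1 (bplus M)) //= (bigD1 (bminus M)) /=; last by rewrite eq_sym b_distinct.
rewrite big1 ?addr0 // => y /andP[n1 n2].
by case: (b_exhaust y) => e; rewrite e eqxx in n1 n2.
Qed.

Lemma key (R : realFieldType) (a b m1 m2 m3 m4 : R) :
  -1 <= a <= 1 -> -1 <= b <= 1 -> 0 <= m1 -> 0 <= m2 -> 0 <= m3 -> 0 <= m4 ->
  m1 + m3 = m2 + m4 ->
  a * (m1 - m4) + b * (m1 - m2) <= m2 + m4.
Proof.
move=> /andP[a1 a2] /andP[b1 b2] h1 h2 h3 h4 e.
have em1 : m1 = m2 + m4 - m3 by lra.
have ha : a * (m1 - m4) <= `|m1 - m4|.
  case: (lerP 0 (m1 - m4)) => h; [rewrite ger0_norm //|rewrite ltr0_norm //]; nra.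
have hb : b * (m1 - m2) <= `|m1 - m2|.
  case: (lerP 0 (m1 - m2)) => h; [rewrite ger0_norm //|rewrite ltr0_norm //]; nra.
suff : `|m1 - m4| + `|m1 - m2| <= m2 + m4 by lra.
case: (lerP 0 (m1 - m4)) => h; [rewrite (ger0_norm h)|rewrite (ltr0_norm h)];
case: (lerP 0 (m1 - m2)) => h'; [rewrite (ger0_norm h')|rewrite (ltr0_norm h')|rewrite (ger0_norm h')|rewrite (ltr0_norm h')]; lra.
Qed.

Theorem corollary2 (R : realFieldType) (T : opTheory R) (Z X : binMeas T)
  (s1 : 'rV[R]_(odim T)) :
  realizable s1 ->
  A12_orbit Z X s1 ->
  `|expect X s1| + `|expect Z s1| > 1 ->
  ~ has_NC_model T.
Proof.
move=> [P1 e1] [s2 [s3 [s4 [[[P2 e2] [[P3 e3] [P4 e4]]] [z12 [z23 z34]] [x12 [x23 x34]] emix]]]].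
move=> hgt [L [mu [xi [[H0 H1 H2 H3 H4] NC]]]].
set zeta := fun l => xi (bM Z) (bplus Z) l - xi (bM Z) (bminus Z) l.
set chi := fun l => xi (bM X) (bplus X) l - xi (bM X) (bminus X) l.
have EZ : forall P, expect Z (st P) = \sum_l zeta l * mu P l.
  move=> P; rewrite /expect !H4 -sumrB; apply: eq_bigr => l _; by rewrite /zeta mulrBl.
have EX : forall P, expect X (st P) = \sum_l chi l * mu P l.
  move=> P; rewrite /expect !H4 -sumrB; apply: eq_bigr => l _; by rewrite /chi mulrBl.
have bnd : forall (M : binMeas T) l,
    -1 <= xi (bM M) (bplus M) l - xi (bM M) (bminus M) l <= 1.
  move=> M l; have := H3 (bM M) l; rewrite sum_bin => s.
  have := H2 (bM M) (bplus M) l; have := H2 (bM M) (bminus M) l.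
  move=> p q; apply/andP; split; lra.
pose PP := fun i : 'I_2 => if val i == 0%N then P1 else P3.
pose QQ := fun i : 'I_2 => if val i == 0%N then P2 else P4.
have hw : prob_weights (fun _ : 'I_2 => 1/2 : R).
  split=> [i|]; first lra.
  rewrite !big_ord_recr big_ord0 /=; lra.
have NCe := NC 2%N 2%N _ PP _ QQ hw hw.
have mixe : forall l, mu P1 l + mu P3 l = mu P2 l + mu P4 l.
  move=> l.
  have := NCe _ l.
  rewrite !big_ord_recr !big_ord0 /= !add0r /PP /QQ /=.
  rewrite e1 e2 e3 e4 emix => /(_ erefl) h; lra.
have Hsum := H1.
set z := expect Z s1. set x := expect X s1.
have main : forall sg tg : R, (sg = 1 \/ sg = -1) -> (tg = 1 \/ tg = -1) ->
    sg * z + tg * x <= 1.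
  move=> sg tg hs ht.
  have E : 2 * (sg * z + tg * x) =
     \sum_l (sg * zeta l * (mu P1 l - mu P4 l) + tg * chi l * (mu P1 l - mu P2 l)).
    have zz : 2 * z = expect Z (st P1) - expect Z (st P4) by rewrite e1 e4 /z; lra.
    have xx : 2 * x = expect X (st P1) - expect X (st P2) by rewrite e1 e2 /x; lra.
    have -> : 2 * (sg * z + tg * x) = sg * (2 * z) + tg * (2 * x) by ring.
    rewrite zz xx !EZ !EX -!sumrB !mulr_sumr -big_split /=.
    apply: eq_bigr => l _; ring.
  have : 2 * (sg * z + tg * x) <= \sum_l (mu P2 l + mu P4 l).
    rewrite E; apply: ler_sum => l _.
    have hz1 : -1 <= sg * zeta l <= 1.
      have := bnd Z l; rewrite -/(zeta l) => /andP[p q].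
      by case: hs => ->; apply/andP; split; lra.
    have hx1 : -1 <= tg * chi l <= 1.
      have := bnd X l; rewrite -/(chi l) => /andP[p q].
      by case: ht => ->; apply/andP; split; lra.
    have := (@key R _ _ _ _ _ _ hz1 hx1 (H0 P1 l) (H0 P2 l) (H0 P3 l) (H0 P4 l) (mixe l)); by [].
  rewrite big_split /= !H1; lra.
move: hgt; rewrite -/z -/x.
have L1 : (1:R) = 1 \/ (1:R) = -1 by left.
have L2 : (-1:R) = 1 \/ (-1:R) = -1 by right.
case: (lerP 0 z) => hz; case: (lerP 0 x) => hx;
  rewrite ?(ger0_norm hz) ?(ger0_norm hx) ?(ltr0_norm hz) ?(ltr0_norm hx).
- have := main 1 1 L1 L1; lra.
- have := main 1 (-1) L1 L2; lra.
- have := main (-1) 1 L2 L1; lra.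
- have := main (-1) (-1) L2 L2; lra.
Qed.
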